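(* Let $p>2$ be an even integer such that $p/2$ is odd. Then there exists a subset $\mathcal{X}$ of $\mathbb{P}^2_\circ$ with $|\mathcal{X}|=|B(2,p)\cap\mathbb{P}^2_\circ|-1$ and $$\kappa(\mathcal{X})\le\kappa(B(2,p)\cap\mathbb{P}^2_\circ)-\frac{p}{2}+1.$$ Moreover, every subset $\mathcal{X}$ of $\mathbb{P}^2_\circ$ with these two properties satisfies at least one of: (i) some point of $B(2,p-1)\cap\mathbb{P}^2_\circ$ is not in $\mathcal{X}$; (ii) some point of $\mathcal{X}$ is not in $B(2,p)\cap\mathbb{P}^2_\circ$.
   Context: A point of $\mathbb{Z}^2$ is primitive if its coordinates are relatively prime; $\mathbb{P}^2_\circ$ denotes the set of primitive points of $\mathbb{Z}^2$ whose first non-zero coordinate is positive. $B(2,p)=\{x\in\mathbb{R}^2:\|x\|_1\le p\}$. For a finite $\mathcal{X}\subset\mathbb{R}^2$, $\kappa(\mathcal{X})=\max_{i\in\{1,2\}}\sum_{x\in\mathcal{X}}|x_i|$. *)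

(* Defs.v *)
From mathcomp Require Import all_boot all_order all_algebra.
Set Implicit Arguments. Unset Strict Implicit. Unset Printing Implicit Defensive.
Import Order.TTheory GRing.Theory Num.Theory.
Local Open Scope ring_scope.

Definition pt := (int * int)%type.

Definition primitive (x : pt) : bool := (gcdz x.1 x.2 == 1)%N.

Definition firstpos (x : pt) : bool := (0 < x.1) || ((x.1 == 0) && (0 < x.2)).

Definition inP2o (x : pt) : bool := primitive x && firstpos x.

Definition l1 (x : pt) : nat := (`|x.1| + `|x.2|)%N.

Definition inB (p : nat) (x : pt) : bool := (l1 x <= p)%N.

(* kappa of a finite set, represented as a duplicate-free list *)
Definition kappa (X : seq pt) : nat :=
  maxn (\sum_(x <- X) `|x.1|)%N (\sum_(x <- X) `|x.2|)%N.

Definition rng (p : nat) : seq int := [seq (i%:Z - p%:Z) | i <- iota 0 (p.*2.+1)].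
Definition BP (p : nat) : seq pt :=
  [seq x <- [seq (a, b) | a <- rng p, b <- rng p] | inP2o x && inB p x].

(* Main.v *)
Require Import Defs.
From mathcomp Require Import all_boot all_order all_algebra zify.
Import Order.TTheory GRing.Theory Num.Theory.
Local Open Scope ring_scope.

Lemma mem_rng p (a : int) : (`|a| <= p)%N -> a \in rng p.
Proof.
move=> h; apply/mapP; exists (absz (a + p%:Z)%R); last by lia.
rewrite mem_iota; lia.
Qed.

Lemma mem_BP p x : (x \in BP p) = inP2o x && inB p x.
Proof.
rewrite mem_filter; apply/idP/idP => [/andP[]//|h]; rewrite h andTb.
case/andP: h => _; case: x => a b; rewrite /inB /l1 => hb.
apply: allpairs_f; apply: mem_rng; rewrite /= in hb; lia.
Qed.

Lemma uniq_BP p : uniq (BP p).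
Proof.
apply: filter_uniq; apply: allpairs_uniq.
- rewrite map_inj_uniq ?iota_uniq // => i j /= h; lia.
- rewrite map_inj_uniq ?iota_uniq // => i j /= h; lia.
- by move=> [a b] [c d] _ _.
Qed.

Definition sw (x : pt) : pt :=
  if firstpos (x.2, x.1) then (x.2, x.1) else (- x.2, - x.1).

Lemma sw_P2o x : inP2o x -> inP2o (sw x).
Proof.
case: x => a b; rewrite /inP2o /sw /primitive /firstpos /= => /andP [hg hf].
case: ifP => /= h.
  by rewrite gcdzC hg h.
rewrite gcdNz gcdzN gcdzC hg /=; lia.
Qed.

Lemma sw_l1 x : l1 (sw x) = l1 x.
Proof. case: x => a b; rewrite /sw /l1 /=; case: ifP => _ /=; lia. Qed.

Lemma sw_1 x : `|(sw x).1|%N = `|x.2|%N.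
Proof. case: x => a b; rewrite /sw /=; case: ifP => _ /=; lia. Qed.

Lemma swK x : firstpos x -> sw (sw x) = x.
Proof.
case: x => a b; rewrite /sw /firstpos /= => hf.
case hc: ((0 < b) || (b == 0) && (0 < a)) => /=; first by rewrite hf.
rewrite !opprK; case: ifP => h2 //.
exfalso; move: h2 hc hf; lia.
Qed.

Lemma sumsym p : (\sum_(x <- BP p) `|x.1|)%N = (\sum_(x <- BP p) `|x.2|)%N.
Proof.
have e : (\sum_(x <- BP p) `|x.2|)%N = (\sum_(x <- map sw (BP p)) `|x.1|)%N.
  rewrite big_map; apply: eq_bigr => x _; by rewrite sw_1.
rewrite e; apply: perm_big; apply: uniq_perm.
- by apply: uniq_BP.
- rewrite map_inj_in_uniq ?uniq_BP //.
  apply: (can_in_inj (g := sw)) => x; rewrite mem_BP => /andP [/andP [_ h] _].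
  exact: swK.
- have sub : {subset map sw (BP p) <= BP p}.
    move=> y /mapP [x]; rewrite !mem_BP => /andP [hx hb] ->.
    by rewrite sw_P2o //= /inB sw_l1.
  have := uniq_min_size (s1 := map sw (BP p)) (s2 := BP p).
  case.
  + rewrite map_inj_in_uniq ?uniq_BP //.
    apply: (can_in_inj (g := sw)) => x; rewrite mem_BP => /andP [/andP [_ h] _].
    exact: swK.
  + exact: sub.
  + by rewrite size_map.
  + by move=> _ h y; rewrite h.
Qed.

Lemma sum_rem (s : seq pt) y (F : pt -> nat) :
  y \in s -> (\sum_(x <- s) F x = F y + \sum_(x <- rem y s) F x)%N.
Proof. by move=> h; rewrite (perm_big _ (perm_to_rem h)) big_cons. Qed.
Arguments sum_rem {s y} F _.

Lemma nt a b m : (a + b = m.*2)%N -> odd m -> (3 <= m)%N -> gcdn a b = 1%N ->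
  (a.+2 <= m)%N || (b.+2 <= m)%N.
Proof.
move=> hab hm h3 hg.
case: (leqP a.+2 m) => // h1; case: (leqP b.+2 m) => // h2.
have [[ha hb]|[ha hb]] : (a = m /\ b = m) \/ (2 %| a /\ 2 %| b)%N by lia.
  by move: hg; rewrite ha hb gcdnn => e; lia.
have : (2 %| gcdn a b)%N by rewrite dvdn_gcd ha hb.
by rewrite hg.
Qed.

Lemma gcd_m2 m : odd m -> (3 <= m)%N -> gcdn (m - 2) (m + 2) = 1%N.
Proof.
move=> hm h3.
have -> : (m + 2 = (m - 2) + 4)%N by lia.
rewrite gcdnDl; apply/eqP; change (coprime (m - 2) (2 ^ 2)).
apply: coprimeXr; rewrite coprimen2; lia.
Qed.

Theorem proposition5p3 (p : nat) :
  (2 < p)%N -> ~~ odd p -> odd p./2 ->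
  (exists X : seq pt,
      [/\ uniq X, all inP2o X, size X = (size (BP p)).-1
        & (kappa X)%:Z <= (kappa (BP p))%:Z - (p./2)%:Z + 1])
  /\
  (forall X : seq pt,
      uniq X -> all inP2o X -> size X = (size (BP p)).-1 ->
      (kappa X)%:Z <= (kappa (BP p))%:Z - (p./2)%:Z + 1 ->
      (exists x : pt, [/\ inP2o x, inB p.-1 x & x \notin X])
      \/ (exists2 x : pt, x \in X & ~~ (inP2o x && inB p x))).
Proof.
move=> hp2 hev hodd.
have hpm : p = (p./2).*2 by lia.
set m := p./2 in hodd hpm *.
have hm3 : (3 <= m)%N by lia.
have hsym := sumsym p.
rewrite /kappa.
set K1 := (\sum_(x <- BP p) `|x.1|)%N in hsym *.
set K2 := (\sum_(x <- BP p) `|x.2|)%N in hsym *.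
split.
  pose u : pt := (Posz (m - 2)%N, Posz (m + 2)%N).
  pose v : pt := (Posz (m + 2)%N, Posz (m - 2)%N).
  pose w : pt := (Posz (m + 1)%N, Posz m).
  have hu : u \in BP p.
    rewrite mem_BP /inP2o /primitive /firstpos /inB /l1 /gcdz /= gcd_m2 //.
    apply/andP; split; [apply/andP; split => //|]; lia.
  have hv : v \in BP p.
    rewrite mem_BP /inP2o /primitive /firstpos /inB /l1 /gcdz /= gcdnC gcd_m2 //.
    apply/andP; split; [apply/andP; split => //|]; lia.
  have hw : inP2o w.
    rewrite /inP2o /primitive /firstpos /gcdz /= addn1.
    have := coprimeSn m; rewrite /coprime => /eqP ->; apply/andP; split => //; lia.
  have hwB : w \notin BP p.
    rewrite mem_BP /inB /l1 /=; apply/negP => /andP [_ h]; lia.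
  have hv' : v \in rem u (BP p).
    rewrite (mem_rem_uniq _ (uniq_BP p)) inE hv andbT; apply/eqP => -[]; lia.
  exists (w :: rem v (rem u (BP p))); split.
  - rewrite /= !rem_uniq ?uniq_BP // andbT.
    by apply: contra hwB => /mem_rem /mem_rem.
  - rewrite /= hw /=; apply/allP => x /mem_rem /mem_rem; rewrite mem_BP.
    by case/andP.
  - have h0 : (0 < size (rem u (BP p)))%N by move: hv'; case: (rem _ _).
    rewrite /= (size_rem hv') (size_rem hu) in h0 *; exact: prednK.
  - have e1 : K1 = ((m - 2) + ((m + 2) + \sum_(x <- rem v (rem u (BP p))) `|x.1|))%N.
      by rewrite /K1 (sum_rem _ hu) (sum_rem _ hv').
    have e2 : K2 = ((m + 2) + ((m - 2) + \sum_(x <- rem v (rem u (BP p))) `|x.2|))%N.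
      by rewrite /K2 (sum_rem (fun x => `|x.2|%N) hu) (sum_rem (fun x => `|x.2|%N) hv').
    rewrite !big_cons /=. clear -e1 e2 hm3; clearbody K1 K2; move: e1 e2; set S1 := (\sum_(_ <- _) `|_.1|)%N; set S2 := (\sum_(_ <- _) `|_.2|)%N. lia.
move=> X hX hall hsz hk.
case: (boolP (has (fun x => ~~ (inP2o x && inB p x)) X)) => [/hasP [x hx hnx]|hnone].
  by right; exists x.
have sub : {subset X <= BP p}.
  move=> x hx; rewrite mem_BP; apply: contraR hnone => hn.
  by apply/hasP; exists x.
case: (boolP (has (fun y => y \notin X) (BP p))) => [/hasP [y0 hy0 hyX0]|hall2]; last first.
  exfalso.
  have sub2 : {subset BP p <= X}.
    move=> y hy; apply: contraR hall2 => hn; by apply/hasP; exists y.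
  have hle : (size (BP p) <= size X)%N := uniq_leq_size (uniq_BP p) sub2.
  have h0 : (0 < size (BP p))%N.
    have : ((1%:Z, 0%:Z) : pt) \in BP p by rewrite mem_BP; apply/andP; split => //; rewrite /inB /l1 /=; lia.
    by case: (BP p).
  move: hsz h0 hle; clear; lia.
have [y hy hyX] : exists2 y : pt, y \in BP p & y \notin X by exists y0.
case hyB: (inB p.-1 y).
  by left; exists y; split => //; move: hy; rewrite mem_BP => /andP[].
exfalso.
have heq : X =i rem y (BP p).
  have := uniq_min_size (s1 := X) (s2 := rem y (BP p)) hX.
  case.
  - move=> x hx; rewrite (mem_rem_uniq _ (uniq_BP p)) inE sub // andbT.
    by apply: contraNneq hyX => <-.
  - by rewrite (size_rem hy) hsz.
  - by [].
have hperm := uniq_perm hX (rem_uniq _ (uniq_BP p)) heq.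
rewrite (perm_big _ hperm) (perm_big (F := fun x => `|x.2|%N) _ hperm) in hk.
have := hy; rewrite mem_BP /inP2o /primitive /gcdz /inB /l1 => /andP [/andP [/eqP hg _] hb1].
move/negbT: hyB; rewrite /inB /l1 => hb2.
have hg' : gcdn `|y.1| `|y.2| = 1%N by case: hg.
have hab : (`|y.1| + `|y.2| = m.*2)%N.
  move: hb1 hb2; rewrite hpm; lia.
have hnt := @nt _ _ _ hab hodd hm3 hg'.
have e1 : K1 = (`|y.1| + \sum_(x <- rem y (BP p)) `|x.1|)%N by rewrite /K1 (sum_rem _ hy).
have e2 : K2 = (`|y.2| + \sum_(x <- rem y (BP p)) `|x.2|)%N by rewrite /K2 (sum_rem _ hy).
move: hk e1 e2 hsym hnt; clear; clearbody K1 K2.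
set S1 := (\sum_(_ <- _) `|_.1|)%N; set S2 := (\sum_(_ <- _) `|_.2|)%N.
lia.
Qed.
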